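(* Let $e_1,e_2,e_3$ be nonzero integers with $e_1+e_2+e_3=0$, $2\,\|\,e_1$, $2\,\|\,e_2$, $4\mid e_3$. Let $n$ be an odd positive square-free integer and $\Lambda=(d_1,d_2,d_3)$ with $d_1,d_2,d_3$ odd square-free divisors of $e_1e_2e_3n$ and $d_1d_2d_3$ a square. If $D^{(n)}_\Lambda(\mathbb{Q}_2)\ne\emptyset$, then $d_3\equiv 1\pmod 4$.
   Context: $D^{(n)}_\Lambda\subset\mathbb{P}^3$ (coordinates $(t,u_1,u_2,u_3)$) is defined by $e_1nt^2+d_2u_2^2-d_3u_3^2=0$, $e_2nt^2+d_3u_3^2-d_1u_1^2=0$, $e_3nt^2+d_1u_1^2-d_2u_2^2=0$. $2\,\|\,m$ means $2\mid m$, $4\nmid m$. *)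

(* Defs.v *)
From mathcomp Require Import all_boot all_order all_algebra.
Set Implicit Arguments. Unset Strict Implicit. Unset Printing Implicit Defensive.
Import Order.TTheory GRing.Theory Num.Theory.
Local Open Scope ring_scope.

Definition exactly2 (m : int) : bool := (2 %| m)%Z && ~~ (4 %| m)%Z.

Definition sqfree_int (z : int) : Prop :=
  forall p : nat, prime p -> ~~ (p * p %| `|z|)%N.

Definition odd_int (z : int) : bool := odd `|z|%N.

Definition is_square_int (z : int) : Prop := exists m : int, z = m ^+ 2.

(* 2-adic integers Z_2 = lim Z/2^k Z, represented by coherent sequences
   (x k) of integer representatives of the residues modulo 2^k. *)
Definition coherent2 (x : nat -> int) : Prop :=
  forall k : nat, (x k.+1 == x k %[mod (2 ^ k)%N%:Z])%Z.

Definition zero2 (x : nat -> int) : Prop :=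
  forall k : nat, (x k == 0 %[mod (2 ^ k)%N%:Z])%Z.

(* The three quadratic forms defining D^(n)_Lambda in P^3 with coordinates
   (t,u1,u2,u3). *)
Definition Dq1 (n e1 d1 d2 d3 t u1 u2 u3 : int) : int :=
  e1 * n * t ^+ 2 + d2 * u2 ^+ 2 - d3 * u3 ^+ 2.
Definition Dq2 (n e2 d1 d2 d3 t u1 u2 u3 : int) : int :=
  e2 * n * t ^+ 2 + d3 * u3 ^+ 2 - d1 * u1 ^+ 2.
Definition Dq3 (n e3 d1 d2 d3 t u1 u2 u3 : int) : int :=
  e3 * n * t ^+ 2 + d1 * u1 ^+ 2 - d2 * u2 ^+ 2.

(* D^(n)_Lambda(Q_2) <> empty : every point of P^3(Q_2) has a representative
   in Z_2^4 \ {0}; so we ask for a nonzero 4-tuple of 2-adic integers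
   satisfying the three equations in Z_2 (i.e. modulo 2^k for every k). *)
Definition D_has_Q2_point (n e1 e2 e3 d1 d2 d3 : int) : Prop :=
  exists t u1 u2 u3 : nat -> int,
    [/\ coherent2 t, coherent2 u1, coherent2 u2 & coherent2 u3] /\
    ~ (zero2 t /\ zero2 u1 /\ zero2 u2 /\ zero2 u3) /\
    forall k : nat,
      [/\ (Dq1 n e1 d1 d2 d3 (t k) (u1 k) (u2 k) (u3 k) == 0 %[mod (2 ^ k)%N%:Z])%Z,
          (Dq2 n e2 d1 d2 d3 (t k) (u1 k) (u2 k) (u3 k) == 0 %[mod (2 ^ k)%N%:Z])%Z &
          (Dq3 n e3 d1 d2 d3 (t k) (u1 k) (u2 k) (u3 k) == 0 %[mod (2 ^ k)%N%:Z])%Z].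

(* Main.v *)
Require Import Defs.
From mathcomp Require Import all_boot all_order all_algebra.
From mathcomp Require Import ring zify.
From Stdlib Require Import Classical.
Import Order.TTheory GRing.Theory Num.Theory.
Local Open Scope ring_scope.

Definition Z4 := 'Z_4.
Definition els : seq Z4 := [:: 0; 1; 2; 3].
Lemma elsP (x : Z4) : x \in els.
Proof. by case: x => [[|[|[|[|m]]]] Hm]. Qed.
Definition fa (P : Z4 -> bool) := all P els.
Definition bf : bool :=
 fa (fun e1 : Z4 => if (e1 * 2 == 0) && (e1 != 0) then
 fa (fun e2 : Z4 => if (e2 * 2 == 0) && (e2 != 0) then
 fa (fun e3 : Z4 => if (e3 == 0) then
 fa (fun n : Z4 => if (n * 2 != 0) then
 fa (fun d1 : Z4 => if (d1 * 2 != 0) then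
 fa (fun d2 : Z4 => if (d2 * 2 != 0) then
 fa (fun d3 : Z4 => if (d3 * 2 != 0) then
 fa (fun m : Z4 => if (d1 * d2 * d3 == m ^+ 2) then
 fa (fun t : Z4 => fa (fun u1 : Z4 => fa (fun u2 : Z4 => fa (fun u3 : Z4 =>
   if [&& (t * 2 != 0) || (u1 * 2 != 0) || (u2 * 2 != 0) || (u3 * 2 != 0),
       e1 * n * t ^+ 2 + d2 * u2 ^+ 2 - d3 * u3 ^+ 2 == 0,
       e2 * n * t ^+ 2 + d3 * u3 ^+ 2 - d1 * u1 ^+ 2 == 0 &
       e3 * n * t ^+ 2 + d1 * u1 ^+ 2 - d2 * u2 ^+ 2 == 0] then (d3 == 1) else true))))
  else true) else true) else true) else true) else true) else true) else true) else true).
Lemma bfT : bf. Proof. vm_compute. exact: erefl. Qed.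

Definition phi (z : int) : Z4 := z%:~R.

Lemma phi0 z : (phi z == 0) = (4 %| z)%Z.
Proof.
rewrite dvdzE /phi.
case: z => n.
  rewrite -val_eqE /= val_Zp_nat //.
rewrite NegzE intrN oppr_eq0 abszN /=.
by rewrite -val_eqE /= val_Zp_nat.
Qed.

Lemma phi2 z : (phi z * 2 == 0) = (2 %| z)%Z.
Proof.
have -> : phi z * 2 = phi (z * 2) by rewrite /phi intrM.
by rewrite phi0 (_ : 4 = 2 * 2) // dvdz_mul2r.
Qed.

Lemma oddE z : odd_int z = ~~ (2 %| z)%Z.
Proof. by rewrite dvdzE /odd_int /= dvdn2 negbK. Qed.

Lemma dvd4 z : (4 %| z)%Z -> phi z = 0.
Proof. by rewrite -phi0 => /eqP. Qed.

Section Desc.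
Variables (n e1 e2 e3 d1 d2 d3 : int).

Definition E (M t u1 u2 u3 : int) : Prop :=
  [/\ (M %| Dq1 n e1 d1 d2 d3 t u1 u2 u3)%Z,
      (M %| Dq2 n e2 d1 d2 d3 t u1 u2 u3)%Z &
      (M %| Dq3 n e3 d1 d2 d3 t u1 u2 u3)%Z].

Lemma E_scale M t u1 u2 u3 :
  E (M * 4) (t * 2) (u1 * 2) (u2 * 2) (u3 * 2) -> E M t u1 u2 u3.
Proof.
have h4 : (4 : int) != 0 by [].
case=> h1 h2 h3; split.
- by rewrite -(dvdz_mul2r h4) (_ : _ * 4 = Dq1 n e1 d1 d2 d3 (t * 2) (u1 * 2) (u2 * 2) (u3 * 2)) // /Dq1; ring.
- by rewrite -(dvdz_mul2r h4) (_ : _ * 4 = Dq2 n e2 d1 d2 d3 (t * 2) (u1 * 2) (u2 * 2) (u3 * 2)) // /Dq2; ring.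
- by rewrite -(dvdz_mul2r h4) (_ : _ * 4 = Dq3 n e3 d1 d2 d3 (t * 2) (u1 * 2) (u2 * 2) (u3 * 2)) // /Dq3; ring.
Qed.

Lemma E_weaken M M' t u1 u2 u3 : (M' %| M)%Z -> E M t u1 u2 u3 -> E M' t u1 u2 u3.
Proof. by move=> hM [h1 h2 h3]; split; apply: dvdz_trans hM _. Qed.

Lemma desc v : forall t u1 u2 u3,
  E (2 ^ (2 * v + 2))%N%:Z t u1 u2 u3 ->
  ~~ [&& ((2 ^ (v + 1))%N%:Z %| t)%Z, ((2 ^ (v + 1))%N%:Z %| u1)%Z,
         ((2 ^ (v + 1))%N%:Z %| u2)%Z & ((2 ^ (v + 1))%N%:Z %| u3)%Z] ->
  exists t' u1' u2' u3', E 4 t' u1' u2' u3' /\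
    ~~ [&& (2 %| t')%Z, (2 %| u1')%Z, (2 %| u2')%Z & (2 %| u3')%Z].
Proof.
elim: v => [|v IH] t u1 u2 u3 hE hnd.
  by exists t, u1, u2, u3.
have [hall|hsome] := boolP [&& (2 %| t)%Z, (2 %| u1)%Z, (2 %| u2)%Z & (2 %| u3)%Z]; last first.
  exists t, u1, u2, u3; split => //.
  apply: E_weaken hE; rewrite dvdzE /=.
  by apply: (@dvdn_exp2l 2 2); rewrite addn2.
case/and4P: hall => ht hu1 hu2 hu3.
apply: (IH (t %/ 2)%Z (u1 %/ 2)%Z (u2 %/ 2)%Z (u3 %/ 2)%Z).
  apply: E_scale; rewrite !divzK //.
  rewrite -PoszM (_ : (2 ^ (2 * v + 2) * 4 = 2 ^ (2 * v.+1 + 2))%N) //.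
  by rewrite (_ : 4 = 2 ^ 2)%N // -expnD; congr (_ ^ _)%N; rewrite mulnS; lia.
have h2 : (2 : int) != 0 by [].
have hp : (2 ^ (v.+1 + 1))%N%:Z = (2 ^ (v + 1))%N%:Z * 2 by rewrite -PoszM -expnSr addSn.
move: hnd; rewrite hp -{1}(divzK ht) -{1}(divzK hu1) -{1}(divzK hu2) -{1}(divzK hu3).
by rewrite !dvdz_mul2r.
Qed.

End Desc.

Lemma coh_shift (x : nat -> int) k : coherent2 x ->
  forall j, (x (k + j)%N == x k %[mod (2 ^ k)%N%:Z])%Z.
Proof.
move=> hc; elim=> [|j IH]; first by rewrite addn0.
rewrite addnS; apply/eqP; rewrite -(eqP IH); apply/eqP.
have := hc (k + j)%N; rewrite !eqz_mod_dvd; apply: dvdz_trans.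
by rewrite dvdzE /= dvdn_exp2l // leq_addr.
Qed.

Lemma nonzero_level (x : nat -> int) : coherent2 x -> ~ zero2 x ->
  exists v, ~~ ((2 ^ (v + 1))%N%:Z %| x (2 * v + 2)%N)%Z.
Proof.
move=> hc /not_all_ex_not [k hk].
case: k hk => [|v] hk.
  by exfalso; apply: hk; rewrite modz1.
exists v.
have := coh_shift x v.+1 hc v.+1.
rewrite (_ : (v.+1 + v.+1 = 2 * v + 2)%N); last by lia.
move/eqP => h; apply/negP; rewrite -[x _]subr0 -eqz_mod_dvd => /eqP h2.
rewrite addn1 in h2; by apply: hk; apply/eqP; rewrite -h h2.
Qed.

Lemma phiQ a b c d f g h :
  phi (a * b * c ^+ 2 + d * f ^+ 2 - g * h ^+ 2) =
  phi a * phi b * phi c ^+ 2 + phi d * phi f ^+ 2 - phi g * phi h ^+ 2.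
Proof. by rewrite /phi !expr2 !(intrB, intrD, intrM). Qed.

Lemma ex2E e : exactly2 e -> (phi e * 2 == 0) && (phi e != 0).
Proof. by move=> /andP[a b]; rewrite phi2 phi0; apply/andP; split; [exact: a | exact: b]. Qed.

Lemma oddP z : odd_int z -> phi z * 2 != 0.
Proof. by rewrite phi2 -oddE. Qed.

Lemma bf_use (e1 e2 e3 n d1 d2 d3 m t u1 u2 u3 : int) :
  exactly2 e1 -> exactly2 e2 -> (4 %| e3)%Z ->
  odd_int n -> odd_int d1 -> odd_int d2 -> odd_int d3 ->
  d1 * d2 * d3 = m ^+ 2 -> E n e1 e2 e3 d1 d2 d3 4 t u1 u2 u3 ->
  ~~ [&& (2 %| t)%Z, (2 %| u1)%Z, (2 %| u2)%Z & (2 %| u3)%Z] ->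
  phi d3 = 1.
Proof.
move=> /ex2E he1 /ex2E he2 /dvd4 /eqP he3 /oddP hn /oddP hd1 /oddP hd2 /oddP hd3 hm [q1 q2 q3] hp.
move: q1 q2 q3; rewrite -!phi0 /Dq1 /Dq2 /Dq3 !phiQ => q1 q2 q3.
have hm' : phi d1 * phi d2 * phi d3 == phi m ^+ 2.
  by rewrite /phi -!intrM hm expr2 intrM.
move: hp; rewrite !negb_and -!phi2 !orbA => hp.
have := bfT; rewrite /bf /fa.
move/allP/(_ _ (elsP (phi e1))); rewrite he1.
move/allP/(_ _ (elsP (phi e2))); rewrite he2.
move/allP/(_ _ (elsP (phi e3))); rewrite he3.
move/allP/(_ _ (elsP (phi n))); rewrite hn.
move/allP/(_ _ (elsP (phi d1))); rewrite hd1.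
move/allP/(_ _ (elsP (phi d2))); rewrite hd2.
move/allP/(_ _ (elsP (phi d3))); rewrite hd3.
move/allP/(_ _ (elsP (phi m))); rewrite hm'.
move/allP/(_ _ (elsP (phi t))).
move/allP/(_ _ (elsP (phi u1))).
move/allP/(_ _ (elsP (phi u2))).
move/allP/(_ _ (elsP (phi u3))).
by rewrite hp q1 q2 q3 => /eqP.
Qed.

Theorem lemma4p1 (e1 e2 e3 n d1 d2 d3 : int) :
  e1 != 0 -> e2 != 0 -> e3 != 0 -> e1 + e2 + e3 = 0 ->
  exactly2 e1 -> exactly2 e2 -> (4 %| e3)%Z ->
  0 < n -> odd_int n -> sqfree_int n ->
  odd_int d1 -> sqfree_int d1 -> (d1 %| e1 * e2 * e3 * n)%Z ->
  odd_int d2 -> sqfree_int d2 -> (d2 %| e1 * e2 * e3 * n)%Z ->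
  odd_int d3 -> sqfree_int d3 -> (d3 %| e1 * e2 * e3 * n)%Z ->
  is_square_int (d1 * d2 * d3) ->
  D_has_Q2_point n e1 e2 e3 d1 d2 d3 ->
  (d3 == 1 %[mod 4])%Z.
Proof.
move=> _ _ _ _ he1 he2 he3 _ hn _ hd1 _ _ hd2 _ _ hd3 _ _ [m hm].
move=> [t [u1 [u2 [u3 [[ct cu1 cu2 cu3] [hnz heq]]]]]].
pose P v := ~~ [&& ((2 ^ (v + 1))%N%:Z %| t (2 * v + 2)%N)%Z,
   ((2 ^ (v + 1))%N%:Z %| u1 (2 * v + 2)%N)%Z,
   ((2 ^ (v + 1))%N%:Z %| u2 (2 * v + 2)%N)%Z &
   ((2 ^ (v + 1))%N%:Z %| u3 (2 * v + 2)%N)%Z].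
have [v hv] : exists v, P v.
  case: (classic (zero2 t)) => zt; last first.
    by have [v hv] := nonzero_level t ct zt; exists v; rewrite /P (negbTE hv).
  case: (classic (zero2 u1)) => zu1; last first.
    by have [v hv] := nonzero_level u1 cu1 zu1; exists v; rewrite /P (negbTE hv) andbF.
  case: (classic (zero2 u2)) => zu2; last first.
    by have [v hv] := nonzero_level u2 cu2 zu2; exists v; rewrite /P (negbTE hv) !andbF.
  case: (classic (zero2 u3)) => zu3; last first.
    by have [v hv] := nonzero_level u3 cu3 zu3; exists v; rewrite /P (negbTE hv) !andbF.
  by exfalso; apply: hnz.
have hE : E n e1 e2 e3 d1 d2 d3 (2 ^ (2 * v + 2))%N%:Z (t (2 * v + 2)%N)
    (u1 (2 * v + 2)%N) (u2 (2 * v + 2)%N) (u3 (2 * v + 2)%N).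
  by case: (heq (2 * v + 2)%N); rewrite !eqz_mod_dvd !subr0.
have [t' [u1' [u2' [u3' [hE4 hp]]]]] := @desc n e1 e2 e3 d1 d2 d3 v _ _ _ _ hE hv.
have := @bf_use _ _ _ _ _ _ _ _ _ _ _ _ he1 he2 he3 hn hd1 hd2 hd3 hm hE4 hp.
move=> h3; rewrite eqz_mod_dvd -phi0.
by rewrite /phi intrB -/(phi d3) h3 subrr.
Qed.
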